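(* Let $n=2k$ with $k\ge 2$. Then $\{a_i,c_i : i=1,\ldots,n\}\cup\{d_{i'} : i'=1,\ldots,k\}$ is a strong resolving set of $U_n$.
   Context: For $n\ge 3$, $U_n$ is the graph with vertex set $\{a_i,b_i,c_i,d_i,e_i : 1\le i\le n\}$ and edge set $\{a_ia_{i+1}, b_ib_{i+1}, e_ie_{i+1}, a_ib_i, b_ic_i, c_id_i, d_ie_i, c_{i+1}d_i : 1\le i\le n\}$, indices taken modulo $n$. $d$ is the graph distance. A vertex $w$ strongly resolves distinct vertices $u,v$ if $d(v,w)=d(v,u)+d(u,w)$ or $d(u,w)=d(u,v)+d(v,w)$. A set $S$ is a strong resolving set if every two distinct vertices are strongly resolved by some vertex of $S$. *)

(* Defs.v *)
From mathcomp Require Import all_boot.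
Set Implicit Arguments. Unset Strict Implicit. Unset Printing Implicit Defensive.

Fixpoint reach (T : finType) (e : rel T) (k : nat) (x y : T) : bool :=
  if k is k'.+1 then reach e k' x y || [exists z, reach e k' x z && e z y]
  else x == y.

(* Every reachable vertex is
   reachable within #|T| - 1 steps, so searching k < #|T| suffices
   (for unreachable pairs the value is #|T|, irrelevant for connected graphs). *)
Definition dist (T : finType) (e : rel T) (x y : T) : nat :=
  find (fun k => reach e k x y) (iota 0 #|T|).

Definition strongly_resolves (T : finType) (e : rel T) (w u v : T) : bool :=
  (dist e v w == dist e v u + dist e u w) || (dist e u w == dist e u v + dist e v w).

Definition strong_resolving_set (T : finType) (e : rel T) (S : {set T}) : Prop :=
  forall u v : T, u != v -> exists2 w, w \in S & strongly_resolves e w u v.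

(* Vertex (s, i) with s : 'I_5 encodes a_i, b_i, c_i, d_i, e_i for s = 0,1,2,3,4;
   indices i range over 'I_n = {0,...,n-1} (paper's index i corresponds to i-1). *)
Definition Uvert (n : nat) := ('I_5 * 'I_n)%type.

Definition nxt (n : nat) (i j : 'I_n) : bool := (nat_of_ord j == (nat_of_ord i).+1 %% n).

(* oriented edge list: a_i a_{i+1}, b_i b_{i+1}, e_i e_{i+1}, a_i b_i, b_i c_i,
   c_i d_i, d_i e_i, c_{i+1} d_i *)
Definition U_edge0 (n : nat) (x y : Uvert n) : bool :=
  let s := nat_of_ord x.1 in let i := x.2 in
  let t := nat_of_ord y.1 in let j := y.2 in
  [|| [&& s == 0, t == 0 & nxt i j],
      [&& s == 1, t == 1 & nxt i j],
      [&& s == 4, t == 4 & nxt i j],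
      [&& s == 0, t == 1 & i == j],
      [&& s == 1, t == 2 & i == j],
      [&& s == 2, t == 3 & i == j],
      [&& s == 3, t == 4 & i == j]
    | [&& s == 2, t == 3 & nxt j i] ].

Definition U_adj (n : nat) : rel (Uvert n) := fun x y => U_edge0 x y || U_edge0 y x.

Definition Sset (n k : nat) : {set Uvert n} :=
  [set x : Uvert n | [|| nat_of_ord x.1 == 0, nat_of_ord x.1 == 2
                       | (nat_of_ord x.1 == 3) && (nat_of_ord x.2 < k)] ].

(* Main.v *)
Require Import Defs.
From mathcomp Require Import all_boot zify.
Set Implicit Arguments. Unset Strict Implicit. Unset Printing Implicit Defensive.

Section Gen.
Variables (T : finType) (e : rel T).

Lemma reachS k x y : reach e k x y -> reach e k.+1 x y.
Proof. by move=> h /=; rewrite h. Qed.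

Lemma reach_add d k x y : reach e k x y -> reach e (k + d) x y.
Proof. elim: d => [|d IH] h; first by rewrite addn0. by rewrite addnS; apply: reachS; apply: IH. Qed.

Lemma reach_mono k m x y : reach e k x y -> k <= m -> reach e m x y.
Proof. move=> h /subnKC <-; exact: reach_add. Qed.

Lemma reach_trans a b x y z : reach e a x y -> reach e b y z -> reach e (a + b) x z.
Proof.
elim: b z => [|b IH] z hxy /=; first by move/eqP=> <-; rewrite addn0.
case/orP => [h|/existsP [w /andP [h1 h2]]]; rewrite addnS /=.
  by rewrite IH.
apply/orP; right; apply/existsP; exists w; by rewrite IH.
Qed.

Lemma reach_edge x y : e x y -> reach e 1 x y.
Proof. move=> h /=; apply/orP; right; apply/existsP; exists x; by rewrite eqxx h. Qed.

Lemma reach0 x : reach e 0 x x.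
Proof. exact: eqxx. Qed.

Lemma reach_lip (P : T -> nat) : (forall a b, e a b -> P a <= P b + 1) ->
  forall k x y, reach e k x y -> P x <= P y + k.
Proof.
move=> hP; elim=> [|k IH] x y /=; first by move/eqP=> ->; rewrite addn0.
case/orP => [h|/existsP [w /andP [h1 h2]]].
  have := IH _ _ h; lia.
have := IH _ _ h1; have := hP _ _ h2; lia.
Qed.

Lemma dist_le m x y : reach e m x y -> m < #|T| -> dist e x y <= m.
Proof.
move=> h hm; rewrite /dist; rewrite leqNgt; apply/negP => hlt.
have := before_find 0 hlt; rewrite nth_iota // add0n h //.
Qed.

Lemma dist_reach m x y : reach e m x y -> m < #|T| -> reach e (dist e x y) x y.
Proof.
move=> h hm.
have hh : has (fun k => reach e k x y) (iota 0 #|T|).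
  by apply/hasP; exists m => //; rewrite mem_iota.
have := nth_find 0 hh; rewrite /dist; move: hh; rewrite has_find size_iota => hf.
by rewrite nth_iota.
Qed.

Lemma dist_refl x : dist e x x = 0.
Proof.
apply/eqP; rewrite -leqn0; apply: (@dist_le 0); first exact: eqxx.
by apply/card_gt0P; exists x.
Qed.

Lemma resolve_gen (P : T -> nat) w x y A B :
  (forall a b, e a b -> P a <= P b + 1) ->
  reach e A y x -> reach e B x w -> A + B < #|T| -> P w = 0 -> A + B <= P y ->
  dist e y w = dist e y x + dist e x w.
Proof.
move=> hP h1 h2 hN hw hy.
have hA : A < #|T| by lia.
have hB : B < #|T| by lia.
have d1 := dist_le h1 hA; have d2 := dist_le h2 hB.
have r := reach_trans (dist_reach h1 hA) (dist_reach h2 hB).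
have d3 := dist_le r ltac:(lia).
have r2 := dist_reach (reach_trans h1 h2) hN.
have := reach_lip hP r2; rewrite hw; lia.
Qed.

End Gen.

Lemma reach_sym (T : finType) (e : rel T) : symmetric e ->
  forall k x y, reach e k x y -> reach e k y x.
Proof.
move=> hs; elim=> [|k IH] x y /=; first by rewrite eq_sym.
case/orP => [h|/existsP [w /andP [h1 h2]]]; first by rewrite IH.
have := reach_trans (reach_edge (e:=e) (x:=y) (y:=w) _) (IH _ _ h1).
by rewrite add1n; apply; rewrite hs.
Qed.

Definition fwd (n c m : nat) := if c <= m then m - c else m + n - c.

Lemma fwd_lt n c m : c < n -> m < n -> fwd n c m < n.
Proof. rewrite /fwd; case: (leqP c m); lia. Qed.

Definition step n f f' := (f' = f.+1 /\ f.+1 < n) \/ (f = n.-1 /\ f' = 0).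

Lemma fwd_nxt n c (i j : 'I_n) : c < n -> nxt i j -> step n (fwd n c i) (fwd n c j).
Proof.
rewrite /nxt /step => hc /eqP hj. have hi := ltn_ord i. have hj' := ltn_ord j.
case: (ltngtP i.+1 n) => h.
- rewrite modn_small // in hj; rewrite /fwd; case: (leqP c i) => h1; case: (leqP c j) => h2; lia.
- lia.
- rewrite h modnn in hj; rewrite /fwd; case: (leqP c i) => h1; case: (leqP c j) => h2; lia.
Qed.

Lemma fwd_eq n c (i j : 'I_n) : c < n -> i = j -> fwd n c i = fwd n c j.
Proof. by move=> _ ->. Qed.

Definition potA n s f := let g := n - f in match s with
  | 0 => minn f g | 1 => (minn f g).+1 | 2 => (minn f g).+2
  | 3 => 3 + minn f g.-1 | _ => 4 + minn f g.-1 end.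
Definition potC n s f := let g := n - f in match s with
  | 0 => (minn f g).+2 | 1 => (minn f g).+1 | 2 => minn (minn (2*f) (f+2)) (minn (2*g) (g+2))
  | 3 => minn (minn (2*f+1) (f+3)) (minn (2*g).-1 (g+2)) | _ => minn (f+2) (g+1) end.
Definition potD n s f := let g := n - f in match s with
  | 0 => 3 + minn f.-1 g | 1 => 2 + minn f.-1 g
  | 2 => if f == 0 then 1 else minn (minn (2*f).-1 (f+2)) (minn (2*g+1) (g+3))
  | 3 => minn (minn (2*f) (f+2)) (minn (2*g) (g+2)) | _ => minn (f+1) (g+1) end.

Definition close a b := a <= b + 1 /\ b <= a + 1.

Definition lipnat (pot : nat -> nat -> nat -> nat) n :=
  [/\ forall s f, s < 4 -> f < n -> close (pot n s f) (pot n s.+1 f),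
      forall s f f', (s == 0) || (s == 1) || (s == 4) -> f < n -> step n f f' -> close (pot n s f) (pot n s f') &
      forall f f', f < n -> step n f f' -> close (pot n 2 f') (pot n 3 f)].

Ltac solvelip := rewrite /close /step; repeat match goal with
   | |- forall s, _ => let s := fresh "s" in case=> [|[|[|[|[|s]]]]] //=
   | |- _ => intros
   end; try lia.

Lemma lipA n : 2 <= n -> lipnat potA n.
Proof.
move=> hn; split.
- case=> [|[|[|[|s]]]] f //= _ hf; rewrite /close; lia.
- case=> [|[|[|[|[|s]]]]] f f' //= _ hf; rewrite /close /step; lia.
- move=> f f' hf; rewrite /close /step /=; lia.
Qed.

Lemma lipC n : 2 <= n -> lipnat potC n.
Proof.
move=> hn; split.
- case=> [|[|[|[|s]]]] f //= _ hf; rewrite /close; lia.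
- case=> [|[|[|[|[|s]]]]] f f' //= _ hf; rewrite /close /step; lia.
- move=> f f' hf; rewrite /close /step /=; lia.
Qed.

Lemma lipD n : 2 <= n -> lipnat potD n.
Proof.
move=> hn; split.
- case=> [|[|[|[|s]]]] f //= _ hf; rewrite /close; case: (f =P 0); lia.
- case=> [|[|[|[|[|s]]]]] f f' //= _ hf; rewrite /close /step; lia.
- move=> f f' hf; rewrite /close /step /=; case: (f' =P 0); lia.
Qed.

Definition vx n s (i : 'I_n) : Uvert n := (inord s, i).
Definition Pot (pot : nat -> nat -> nat -> nat) n (c : nat) (x : Uvert n) := pot n (val x.1) (fwd n c (val x.2)).
Arguments Pot pot n c x : clear implicits.

Lemma Pot_vx pot n c s (i : 'I_n) : s < 5 -> Pot pot n c (vx s i) = pot n s (fwd n c i).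
Proof. by move=> hs; rewrite /Pot /vx /= inordK. Qed.

Lemma Pot_close pot n c (a b : Uvert n) : lipnat pot n -> c < n -> U_edge0 a b ->
  close (Pot pot n c a) (Pot pot n c b).
Proof.
case=> h1 h2 h3 hc; case: a b => [s i] [t j]; rewrite /U_edge0 /Pot /=.
have hfi := fwd_lt hc (ltn_ord i); have hfj := fwd_lt hc (ltn_ord j).
have cl : forall a b, close a b -> close b a by move=> a b []; split.
case/orP => [/and3P [/eqP -> /eqP -> h]|]; first by apply: h2 => //; exact: fwd_nxt.
case/orP => [/and3P [/eqP -> /eqP -> h]|]; first by apply: h2 => //; exact: fwd_nxt.
case/orP => [/and3P [/eqP -> /eqP -> h]|]; first by apply: h2 => //; exact: fwd_nxt.
case/orP => [/and3P [/eqP -> /eqP -> /eqP ->]|]; first by apply: h1.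
case/orP => [/and3P [/eqP -> /eqP -> /eqP ->]|]; first by apply: h1.
case/orP => [/and3P [/eqP -> /eqP -> /eqP ->]|]; first by apply: h1.
case/orP => [/and3P [/eqP -> /eqP -> /eqP ->]|]; first by apply: h1.
by case/and3P => [/eqP -> /eqP -> h]; apply: h3 => //; exact: fwd_nxt.
Qed.

Lemma Pot_lip pot n c : lipnat pot n -> c < n ->
  forall a b : Uvert n, U_adj a b -> Pot pot n c a <= Pot pot n c b + 1.
Proof.
move=> hl hc a b; rewrite /U_adj => /orP [h|h].
  by case: (Pot_close hl hc h).
by case: (Pot_close hl hc h).
Qed.

Lemma U_sym n : symmetric (@U_adj n).
Proof. by move=> a b; rewrite /U_adj orbC. Qed.

Lemma card_U n : #|{: Uvert n}| = 5 * n.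
Proof. by rewrite /Uvert card_prod !card_ord. Qed.

Lemma resU pot n c (w x y : Uvert n) A B : lipnat pot n -> c < n ->
  Pot pot n c w = 0 -> reach (@U_adj n) A y x -> reach (@U_adj n) B x w ->
  A + B < 5 * n -> A + B <= Pot pot n c y ->
  dist (@U_adj n) y w = dist (@U_adj n) y x + dist (@U_adj n) x w.
Proof.
move=> hl hc hw h1 h2 hN hy; apply: (resolve_gen (P := Pot pot n c)) h1 h2 _ hw hy.
  exact: Pot_lip.
by rewrite card_U.
Qed.

Lemma sres_sym (T : finType) (e : rel T) w u v : strongly_resolves e w u v = strongly_resolves e w v u.
Proof. by rewrite /strongly_resolves orbC. Qed.

Section Edges.
Variable n : nat.
Implicit Types i j : 'I_n.
Notation R := (reach (@U_adj n)).

Lemma adj_cyc s i : (s == 0) || (s == 1) || (s == 4) -> U_adj (vx s i) (vx s (ordS i)).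
Proof.
move=> hs; have hn : nxt i (ordS i) by rewrite /nxt.
by case/orP: hs => [/orP []|] /eqP ->; rewrite /U_adj /U_edge0 /vx /= !inordK //= hn.
Qed.

Lemma adj_lay s i : s < 4 -> U_adj (vx s i) (vx s.+1 i).
Proof.
move=> hs; rewrite /U_adj /U_edge0 /vx /= !inordK //; last by lia.
by case: s hs => [|[|[|[|]]]] //= _; rewrite eqxx ?orbT.
Qed.

Lemma adj_cd i : U_adj (vx 2 (ordS i)) (vx 3 i).
Proof. by rewrite /U_adj /U_edge0 /vx /= !inordK //= /nxt eqxx !orbT. Qed.

Lemma R1 x y : U_adj x y -> R 1 x y.
Proof. exact: reach_edge. Qed.

Lemma R1' x y : U_adj y x -> R 1 x y.
Proof. by rewrite U_sym; exact: reach_edge. Qed.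

Lemma Rsym k x y : R k x y -> R k y x.
Proof. apply: reach_sym; exact: U_sym. Qed.

Lemma Rt a b x y z : R a x y -> R b y z -> R (a + b) x z.
Proof. exact: reach_trans. Qed.

Lemma Rm k m x y : R k x y -> k <= m -> R m x y.
Proof. exact: reach_mono. Qed.

Lemma val_ordS i : nat_of_ord (ordS i) = if i.+1 == n then 0 else i.+1.
Proof.
rewrite /=; have := ltn_ord i; case: eqP => [->|h] hi; first by rewrite modnn.
by rewrite modn_small //; lia.
Qed.

Lemma val_pred j : nat_of_ord (ord_pred j) = if nat_of_ord j == 0 then n.-1 else (nat_of_ord j).-1.
Proof.
rewrite /=; have := ltn_ord j; case: eqP => [->|h] hj.
  by rewrite add0n modn_small //; lia.
have -> : (j + n).-1 = (j.-1) + n by lia.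
by rewrite modnDr modn_small //; lia.
Qed.

Lemma fwd_inj c i j : c < n -> fwd n c i = fwd n c j -> i = j.
Proof.
move=> hc; have := ltn_ord i; have := ltn_ord j; rewrite /fwd => hj hi.
move=> h; apply/val_inj => /=; move: h; case: (leqP c i); case: (leqP c j); lia.
Qed.

Lemma cyc s (i j : 'I_n) : (s == 0) || (s == 1) || (s == 4) -> R (fwd n i j) (vx s i) (vx s j).
Proof.
move=> hs; suff: forall t j, fwd n i j = t -> R t (vx s i) (vx s j) by move=> /(_ _ j erefl).
elim=> [|t IH] {}j ht.
  have -> : j = i by apply: (@fwd_inj i) => //; rewrite ht /fwd leqnn subnn.
  exact: reach0.
have hi := ltn_ord i; have hj := ltn_ord j.
have hp : fwd n i (ord_pred j) = t.
  have hv := val_pred j; move: ht hv; rewrite /fwd.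
  case: (leqP i j) => h1; case: (leqP i (ord_pred j)) => h2; case: eqP => h3; lia.
have := Rt (IH _ hp) (R1 (adj_cyc (ord_pred j) hs)).
by rewrite ord_predK addn1.
Qed.

End Edges.
Arguments cyc [n] s i j _.
Arguments adj_lay [n] s i _.
Arguments adj_cyc [n] s i _.

Section Cases.
Variable k : nat.
Hypothesis hk : 2 <= k.
Local Notation n := (2 * k).
Local Notation R := (reach (@U_adj n)).
Local Notation SR := (strongly_resolves (@U_adj n)).
Implicit Types i j : 'I_n.

Lemma hn2 : 2 <= n. Proof. lia. Qed.

Lemma fwd_spec c m : (c <= m /\ fwd n c m = m - c) \/ (m < c /\ fwd n c m = m + n - c).
Proof. rewrite /fwd; case: leqP; lia. Qed.

Lemma fwd_ii i : fwd n i i = 0.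
Proof. by rewrite /fwd leqnn subnn. Qed.

Lemma fwd_sum i j : i != j -> fwd n i j + fwd n j i = n.
Proof.
move=> h; have : nat_of_ord i != nat_of_ord j by [].
have := ltn_ord i; have := ltn_ord j; have := fwd_spec i j; have := fwd_spec j i; lia.
Qed.

Lemma fwd_S i j : fwd n (ordS j) i = (n - fwd n i j).-1.
Proof.
have := val_ordS j; have := ltn_ord i; have := ltn_ord j.
have := fwd_spec i j; have := fwd_spec (ordS j) i; case: eqP; lia.
Qed.

Lemma fwd_Si i : fwd n i (ordS i) = 1.
Proof.
have := val_ordS i; have := ltn_ord i; have := fwd_spec i (ordS i); case: eqP; lia.
Qed.

Lemma fwd_ltn c i : c < n -> fwd n c i < n.
Proof. move=> hc; exact: fwd_lt hc (ltn_ord i). Qed.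

Lemma Rmin a b x y : R a x y -> R b x y -> R (minn a b) x y.
Proof. by move=> h1 h2; case: leqP => _. Qed.

Lemma Rm' k1 k2 x y : R k1 x y -> k1 = k2 -> R k2 x y.
Proof. by move=> h <-. Qed.

Ltac sr1 := apply/orP; left; apply/eqP.
Ltac sr2 := apply/orP; right; apply/eqP.

Lemma BB i j : i != j -> SR (vx 0 i) (vx 1 i) (vx 1 j).
Proof.
move=> hij; sr1.
apply: (@resU potA n i _ _ _ (minn (fwd n i j) (fwd n j i)) 1 (lipA hn2) (ltn_ord i)).
- by rewrite Pot_vx // fwd_ii /=; lia.
- apply: Rmin; [exact: Rsym (cyc 1 i j isT) | exact: cyc 1 j i isT].
- exact: R1' (adj_lay 0 i isT).
- have := fwd_ltn j (ltn_ord i); lia.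
- rewrite Pot_vx //=; have := fwd_sum hij; lia.
Qed.

Lemma BE i j : SR (vx 0 i) (vx 1 i) (vx 4 j).
Proof.
sr1.
apply: (@resU potA n i _ _ _ (minn (fwd n i j + 3) (fwd n (ordS j) i + 3)) 1 (lipA hn2) (ltn_ord i)).
- by rewrite Pot_vx // fwd_ii /=; lia.
- apply: Rmin.
    apply: Rsym; apply: Rm' (Rt (Rt (Rt (cyc 1 i j isT) (R1 (adj_lay 1 j isT)))
        (R1 (adj_lay 2 j isT))) (R1 (adj_lay 3 j isT))) _; lia.
  apply: Rm' (Rt (Rt (Rt (R1' (adj_lay 3 j isT)) (R1' (adj_cd j)))
        (R1' (adj_lay 1 (ordS j) isT))) (cyc 1 (ordS j) i isT)) _; lia.
- exact: R1' (adj_lay 0 i isT).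
- have := fwd_ltn j (ltn_ord i); lia.
- rewrite Pot_vx //= fwd_S; have := fwd_ltn j (ltn_ord i); lia.
Qed.

Lemma BD i j : SR (vx 0 i) (vx 1 i) (vx 3 j).
Proof.
sr1.
apply: (@resU potA n i _ _ _ (minn (fwd n i j + 2) (fwd n (ordS j) i + 2)) 1 (lipA hn2) (ltn_ord i)).
- by rewrite Pot_vx // fwd_ii /=; lia.
- apply: Rmin.
    apply: Rsym; apply: Rm' (Rt (Rt (cyc 1 i j isT) (R1 (adj_lay 1 j isT)))
        (R1 (adj_lay 2 j isT))) _; lia.
  apply: Rm' (Rt (Rt (R1' (adj_cd j))
        (R1' (adj_lay 1 (ordS j) isT))) (cyc 1 (ordS j) i isT)) _; lia.
- exact: R1' (adj_lay 0 i isT).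
- have := fwd_ltn j (ltn_ord i); lia.
- rewrite Pot_vx //= fwd_S; have := fwd_ltn j (ltn_ord i); lia.
Qed.

Lemma EE1 i j : 0 < fwd n i j < k -> SR (vx 0 i) (vx 4 i) (vx 4 j).
Proof.
move=> hf; sr1.
apply: (@resU potA n i _ _ _ (fwd n i j) 4 (lipA hn2) (ltn_ord i)).
- by rewrite Pot_vx // fwd_ii /=; lia.
- exact: Rsym (cyc 4 i j isT).
- apply: Rm' (Rt (Rt (Rt (R1' (adj_lay 3 i isT)) (R1' (adj_lay 2 i isT)))
        (R1' (adj_lay 1 i isT))) (R1' (adj_lay 0 i isT))) _; lia.
- lia.
- rewrite Pot_vx //=; lia.
Qed.

Lemma EE2 i j : fwd n i j = k -> SR (vx 3 i) (vx 4 i) (vx 4 j).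
Proof.
move=> hf; sr1.
apply: (@resU potD n i _ _ _ (fwd n i j) 1 (lipD hn2) (ltn_ord i)).
- by rewrite Pot_vx // fwd_ii /=; lia.
- exact: Rsym (cyc 4 i j isT).
- exact: R1' (adj_lay 3 i isT).
- lia.
- rewrite Pot_vx //=; lia.
Qed.

Lemma DD1 i j : 0 < fwd n i j < k -> SR (vx 2 i) (vx 3 i) (vx 3 j).
Proof.
move=> hf; sr1.
apply: (@resU potC n i _ _ _ (if fwd n i j == 1 then 2 else fwd n i j + 2) 1 (lipC hn2) (ltn_ord i)).
- by rewrite Pot_vx // fwd_ii /=; lia.
- case: eqP => h1.
    have hj : j = ordS i by apply: (@fwd_inj _ i) => //; rewrite fwd_Si.
    subst j; apply: Rsym; exact: Rt (R1' (adj_cd i)) (R1 (adj_lay 2 (ordS i) isT)).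
  apply: Rsym; apply: Rm' (Rt (Rt (R1 (adj_lay 3 i isT)) (cyc 4 i j isT))
        (R1' (adj_lay 3 j isT))) _; lia.
- exact: R1' (adj_lay 2 i isT).
- case: eqP; lia.
- rewrite Pot_vx //=; case: eqP; lia.
Qed.

Lemma ED1 i j : fwd n j i < k -> SR (vx 0 j) (vx 3 j) (vx 4 i).
Proof.
move=> hf; sr1.
apply: (@resU potA n j _ _ _ (fwd n j i + 1) 3 (lipA hn2) (ltn_ord j)).
- by rewrite Pot_vx // fwd_ii /=; lia.
- apply: Rsym; apply: Rm' (Rt (R1 (adj_lay 3 j isT)) (cyc 4 j i isT)) _; lia.
- apply: Rm' (Rt (Rt (R1' (adj_lay 2 j isT)) (R1' (adj_lay 1 j isT)))
        (R1' (adj_lay 0 j isT))) _; lia.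
- lia.
- rewrite Pot_vx //=; lia.
Qed.

Lemma ED2 i j : fwd n i j = k -> SR (vx 3 i) (vx 4 i) (vx 3 j).
Proof.
move=> hf; sr1.
apply: (@resU potD n i _ _ _ (fwd n i j + 1) 1 (lipD hn2) (ltn_ord i)).
- by rewrite Pot_vx // fwd_ii /=; lia.
- apply: Rsym; exact: Rt (cyc 4 i j isT) (R1' (adj_lay 3 j isT)).
- exact: R1' (adj_lay 3 i isT).
- lia.
- rewrite Pot_vx //=; lia.
Qed.

Lemma ED3 i j : 0 < fwd n i j < k -> SR (vx 2 (ordS j)) (vx 3 j) (vx 4 i).
Proof.
move=> hf; sr1.
apply: (@resU potC n (ordS j) _ _ _ (fwd n i j + 1) 1 (lipC hn2) (ltn_ord _)).
- by rewrite Pot_vx // fwd_ii /=; lia.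
- exact: Rt (cyc 4 i j isT) (R1' (adj_lay 3 j isT)).
- exact: R1' (adj_cd j).
- lia.
- rewrite Pot_vx //= fwd_S; lia.
Qed.

End Cases.

Section Main.
Variable k : nat.
Hypothesis hk : 2 <= k.
Local Notation n := (2 * k).
Local Notation SR := (strongly_resolves (@U_adj n)).
Local Notation S := (Sset n k).
Implicit Types i j : 'I_n.

Lemma memS s i : s < 5 -> (vx s i \in S) = [|| s == 0, s == 2 | (s == 3) && (i < k)].
Proof. by move=> hs; rewrite inE /vx /= inordK. Qed.

Definition Ex (x y : Uvert n) := exists2 w, w \in S & SR w x y.

Lemma Ex_sym x y : Ex x y -> Ex y x.
Proof. by case=> w h1 h2; exists w => //; rewrite sres_sym. Qed.

Lemma spec2 i j : fwd n i j = k -> (fwd n j i = k /\ ((i < k) || (j < k))).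
Proof.
have := fwd_spec hk i j; have := fwd_spec hk j i; have := ltn_ord i; have := ltn_ord j.
move=> hj hi; case: (ltnP i k); case: (ltnP j k) => /= h1 h2; lia.
Qed.

Lemma EE_all i j : i != j -> Ex (vx 4 i) (vx 4 j).
Proof.
move=> hij; have hs := fwd_sum hk hij; have hl := fwd_lt (ltn_ord i) (ltn_ord j).
have hne : nat_of_ord i != nat_of_ord j by [].
have f0 : 0 < fwd n i j.
  have := fwd_spec hk i j; have := ltn_ord i; have := ltn_ord j; lia.
case: (ltngtP (fwd n i j) k) => h.
- exists (vx 0 i); first by rewrite memS.
  apply: EE1 => //; lia.
- apply: Ex_sym; exists (vx 0 j); first by rewrite memS.
  apply: EE1 => //; lia.
- have [h2 /orP [hi|hj]] := spec2 h.
  + by exists (vx 3 i); [rewrite memS // hi | exact: EE2].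
  + by apply: Ex_sym; exists (vx 3 j); [rewrite memS // hj | exact: EE2].
Qed.

Lemma DD_all i j : i != j -> k <= i -> k <= j -> Ex (vx 3 i) (vx 3 j).
Proof.
move=> hij hi hj; have hs := fwd_sum hk hij; have hl := fwd_lt (ltn_ord i) (ltn_ord j).
have hne : nat_of_ord i != nat_of_ord j by [].
have f0 : 0 < fwd n i j.
  have := fwd_spec hk i j; have := ltn_ord i; have := ltn_ord j; lia.
case: (ltngtP (fwd n i j) k) => h.
- exists (vx 2 i); first by rewrite memS.
  apply: DD1 => //; lia.
- apply: Ex_sym; exists (vx 2 j); first by rewrite memS.
  apply: DD1 => //; lia.
- have [_ /orP [h1|h1]] := spec2 h; lia.
Qed.

Lemma ED_all i j : k <= j -> Ex (vx 4 i) (vx 3 j).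
Proof.
move=> hj.
have := fwd_spec hk i j; have := fwd_spec hk j i; have := ltn_ord i; have := ltn_ord j => hj' hi' s1 s2.
case: (ltnP (fwd n j i) k) => h1.
  apply: Ex_sym; exists (vx 0 j); first by rewrite memS.
  exact: ED1.
case: (eqVneq (fwd n i j) k) => h2.
  exists (vx 3 i); last exact: ED2.
  rewrite memS //; apply/orP; right; apply/orP; right; apply/andP; split => //; lia.
apply: Ex_sym; exists (vx 2 (ordS j)); first by rewrite memS.
apply: ED3 => //; lia.
Qed.

Lemma main_aux s t i j : s < 5 -> t < 5 -> vx s i != vx t j -> Ex (vx s i) (vx t j).
Proof.
move=> hs ht huv.
case hu: (vx s i \in S).
  exists (vx s i) => //; apply/orP; left; by rewrite dist_refl addn0.
case hv: (vx t j \in S).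
  exists (vx t j) => //; apply/orP; right; by rewrite dist_refl addn0.
have neq : s = t -> i != j by move=> e; subst; apply: contraNneq huv => ->.
move: hu hv; rewrite !memS //.
case: s hs huv neq => [|[|[|[|[|s]]]]] //= hs huv neq;
  case: t ht huv neq => [|[|[|[|[|t]]]]] //= ht huv neq hu hv.
- by exists (vx 0 i); [rewrite memS | apply: (BB hk); exact: neq].
- by exists (vx 0 i); [rewrite memS | apply: (BD hk)].
- by exists (vx 0 i); [rewrite memS | apply: (BE hk)].
- by apply: Ex_sym; exists (vx 0 j); [rewrite memS | apply: (BD hk)].
- apply: DD_all; [exact: neq | |]; move/negbT: hu; move/negbT: hv; lia.
- apply: Ex_sym; apply: ED_all; move/negbT: hu; lia.
- by apply: Ex_sym; exists (vx 0 j); [rewrite memS | apply: (BE hk)].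
- apply: ED_all; move/negbT: hv; lia.
- apply: EE_all; exact: neq.
Qed.

End Main.

Lemma vxE n (x : Uvert n) : x = vx (nat_of_ord x.1) x.2.
Proof. case: x => s i; rewrite /vx /=; congr pair; apply/val_inj; rewrite /= inordK //. Qed.

Theorem lemma4p8 (k : nat) (hk : 2 <= k) :
  strong_resolving_set (@U_adj (2 * k)) (Sset (2 * k) k).
Proof.
move=> u v huv; rewrite (vxE u) (vxE v); apply: main_aux => //.
by rewrite -!vxE.
Qed.
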